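(* Let $\mathcal A=\bigcup_{\xi<\kappa}\mathcal A_\xi$ where $(\mathcal A_\xi,\mu_\xi)_{\xi<\kappa}$ satisfy conditions (i)–(iv) below (with $\mathcal A_0,\mu_0$ as in the context being the $0$-th terms and the $\mathcal A_\xi$ increasing). Then $\mathcal A$ carries an almost strictly positive finitely additive probability measure, and the quotient $\mathcal A/\mathrm{fin}$ (by the ideal of finite subsets of $D$) is not $\sigma$-centred. The conditions are: (i) $|\mathcal A_\xi|<\kappa$; (ii) $\mu_\xi$ is an almost strictly positive finitely additive probability measure on $\mathcal A_\xi$; (iii) $\mu_\eta|\mathcal A_\xi=\mu_\xi$ for $\xi<\eta<\kappa$; (iv) for every $J\in\mathcal J$ there is $\varphi\in\omega^J$ with $X_\varphi(\mathcal S^J)\in\mathcal A$ and $D\setminus X_\varphi(\mathcal S^J)$ infinite.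
   Context: $\lambda$ is the product measure on $2^\omega$; $\mathcal E$ the ideal of $A\subseteq 2^\omega$ with $\lambda(\overline A)=0$; $\kappa_0=\mathrm{cov}(\mathcal E)$; $\kappa=\mathrm{cof}[\kappa_0]^{\le\omega}$ (least size of a family of countable subsets of $\kappa_0$ cofinal under inclusion). Fix a countable dense $D\subseteq 2^\omega$ and a bijection $d:\omega\to D$. $\mathcal A_0$ is the subalgebra of $P(D)$ generated by $\{C\cap D: C \text{ clopen}\}$ and the finite subsets of $D$; $\mu_0((C\cap D)\triangle F)=\lambda(C)$ for $C$ clopen, $F$ finite. A finitely additive measure on an algebra $\mathcal B\subseteq P(D)$ is almost strictly positive if it vanishes exactly on the finite members of $\mathcal B$. Fix closed $\lambda$-null $Z_\alpha\subseteq 2^\omega$ ($\alpha<\kappa_0$) covering $2^\omega$, write $Z_\alpha=\bigcap_k C_{\alpha,k}$ with $C_{\alpha,k}$ decreasing clopen, and let $S_\alpha(k)=(C_{\alpha,k}\cap D)\setminus\{d(0),\dots,d(k-1)\}$. $\mathcal J$ is a family of countable subsets of $\kappa_0$ of size $\kappa$ cofinal in $[\kappa_0]^{\le\omega}$; for $J\in\mathcal J$, $\mathcal S^J=\{S_\alpha:\alpha\in J\}$ and $X_\varphi(\mathcal S^J)=\bigcup_{\alpha\in J}S_\alpha(\varphi(\alpha))$ for $\varphi\in\omega^J$. A Boolean algebra is $\sigma$-centred if it is a countable union of centred families (families in which every finite subfamily has nonzero meet) of nonzero elements. *)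

(* Defs.v *)
From Stdlib Require Import Reals List Arith.
Import ListNotations.
Set Implicit Arguments.

Definition Cantor := nat -> bool.

(* A clopen subset of 2^omega is determined by a depth n and a pattern
   on the first n coordinates; every clopen set arises this way. *)
Record clopen := Clopen { cdepth : nat; cpat : list bool -> bool }.

Definition prefix (x : Cantor) (n : nat) : list bool := map x (seq 0 n).

Definition inC (C : clopen) (x : Cantor) : Prop :=
  cpat C (prefix x (cdepth C)) = true.

Fixpoint bitlists (n : nat) : list (list bool) :=
  match n with
  | O => [nil]
  | S m => map (cons false) (bitlists m) ++ map (cons true) (bitlists m)
  end.

Definition lam (C : clopen) : R :=
  (INR (length (filter (cpat C) (bitlists (cdepth C)))) / 2 ^ cdepth C)%R.

(* A is in the ideal E, i.e. lambda(closure A) = 0.  Since closure A is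
   compact, this holds iff A is covered by clopen sets of arbitrarily
   small measure. *)
Definition inE (A : Cantor -> Prop) : Prop :=
  forall eps : R, (0 < eps)%R ->
    exists C : clopen, (forall x, A x -> inC C x) /\ (lam C < eps)%R.

Definition card_le (A B : Type) : Prop :=
  exists f : A -> B, forall a b, f a = f b -> a = b.
Definition card_lt (A B : Type) : Prop := card_le A B /\ ~ card_le B A.

Definition is_cov_E (K0 : Type) : Prop :=
  (exists F : K0 -> Cantor -> Prop,
      (forall a, inE (F a)) /\ (forall x, exists a, F a x)) /\
  (forall (I : Type) (F : I -> Cantor -> Prop),
      (forall i, inE (F i)) -> (forall x, exists i, F i x) -> card_le K0 I).

Definition countable_sub (T : Type) (S : T -> Prop) : Prop :=
  exists f : nat -> option T, forall t, S t -> exists n, f n = Some t.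

Definition cofinal_countable (T I : Type) (F : I -> T -> Prop) : Prop :=
  (forall i, countable_sub (F i)) /\
  (forall S : T -> Prop, countable_sub S -> exists i, forall t, S t -> F i t).

Definition is_cof_countable (K0 Kap : Type) : Prop :=
  (exists F : Kap -> K0 -> Prop, cofinal_countable F) /\
  (forall (I : Type) (F : I -> K0 -> Prop), cofinal_countable F -> card_le Kap I).

(* (Kap, lt) is a well-order all of whose proper initial segments have
   cardinality < |Kap|, i.e. it is (isomorphic to) the initial ordinal |Kap|. *)
Definition initial_ordinal (Kap : Type) (lt : Kap -> Kap -> Prop) : Prop :=
  well_founded lt /\
  (forall x y z, lt x y -> lt y z -> lt x z) /\
  (forall x y, lt x y \/ x = y \/ lt y x) /\
  (forall xi : Kap, card_lt {eta : Kap | lt eta xi} Kap).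

(** * Subsets of D, identified with subsets of omega via d *)
Definition Sub := nat -> Prop.

Definition finite (X : Sub) : Prop := exists N, forall n, X n -> (n < N)%nat.
Definition infinite (X : Sub) : Prop := ~ finite X.

Definition symdiff (X Y : Sub) : Sub := fun n => ~ (X n <-> Y n).

Definition is_algebra (B : Sub -> Prop) : Prop :=
  B (fun _ => True) /\
  (forall X, B X -> B (fun n => ~ X n)) /\
  (forall X Y, B X -> B Y -> B (fun n => X n \/ Y n)).

Definition fa_prob (B : Sub -> Prop) (mu : Sub -> R) : Prop :=
  mu (fun _ => True) = 1%R /\
  (forall X, B X -> (0 <= mu X)%R) /\
  (forall X Y, B X -> B Y -> (forall n, ~ (X n /\ Y n)) ->
     mu (fun n => X n \/ Y n) = (mu X + mu Y)%R).

Definition almost_strictly_positive (B : Sub -> Prop) (mu : Sub -> R) : Prop :=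
  forall X, B X -> (mu X = 0%R <-> finite X).

(* B / fin is sigma-centred: its nonzero elements (classes of infinite
   members of B) are a countable union of centred families, the meet of
   classes being the class of the intersection. *)
Definition sigma_centred_mod_fin (B : Sub -> Prop) : Prop :=
  exists Cn : nat -> Sub -> Prop,
    (forall n X, Cn n X -> B X /\ infinite X) /\
    (forall X, B X -> infinite X -> exists n, Cn n X) /\
    (forall n (l : list Sub), (forall X, In X l -> Cn n X) ->
        infinite (fun m => forall X, In X l -> X m)).

Definition trace (d : nat -> Cantor) (C : clopen) : Sub := fun n => inC C (d n).

Definition A0_mem (d : nat -> Cantor) (X : Sub) : Prop :=
  exists (C : clopen) (F : Sub), finite F /\ X = symdiff (trace d C) F.

(* X_phi(S^J) = union_{a in J} S_a(phi a),
   S_a(k) = (C_{a,k} ∩ D) \ {d 0, ..., d (k-1)} *)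
Definition Xphi (d : nat -> Cantor) (K0 : Type) (Cz : K0 -> nat -> clopen)
  (J : K0 -> Prop) (phi : K0 -> nat) : Sub :=
  fun n => exists a, J a /\ (phi a <= n)%nat /\ inC (Cz a (phi a)) (d n).

(* Main.v *)
Require Import Defs.
From Stdlib Require Import Reals List Arith.
From Stdlib Require Import Classical ClassicalEpsilon Lia.
Import ListNotations.

Lemma choice_ex {A B : Type} (P : A -> B -> Prop) :
  (forall a, exists b, P a b) -> exists f : A -> B, forall a, P a (f a).
Proof.
  intro H. exists (fun a => proj1_sig (constructive_indefinite_description _ (H a))).
  intro a. exact (proj2_sig (constructive_indefinite_description _ (H a))).
Qed.

Lemma prefix_S (x : Cantor) k : prefix x (S k) = prefix x k ++ [x k].
Proof. unfold prefix. rewrite seq_S, map_app. reflexivity. Qed.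

Lemma finite_mono (P Q : Sub) : (forall m, P m -> Q m) -> finite Q -> finite P.
Proof. intros H [N HN]. exists N. intros n Hn. apply HN, H, Hn. Qed.

Lemma finite_union (P Q R0 : Sub) : finite P -> finite Q ->
  (forall m, R0 m -> P m \/ Q m) -> finite R0.
Proof.
  intros [N1 H1] [N2 H2] H. exists (N1 + N2). intros n Hn.
  destruct (H n Hn) as [h|h]; [specialize (H1 n h)|specialize (H2 n h)]; lia.
Qed.

Section Point.
Variable d : nat -> Cantor.
Variable Cn0 : Sub -> Prop.

Definition good (p : list bool) : Prop :=
  forall l, (forall X, In X l -> Cn0 X) ->
    infinite (fun m => prefix (d m) (length p) = p /\ forall X, In X l -> X m).

Lemma good_step p : good p -> good (p ++ [false]) \/ good (p ++ [true]).
Proof.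
  intro Hg. apply NNPP. intro Hn.
  apply not_or_and in Hn. destruct Hn as [H0 H1].
  unfold good in H0, H1.
  apply not_all_ex_not in H0. destruct H0 as [l0 H0].
  apply not_all_ex_not in H1. destruct H1 as [l1 H1].
  apply imply_to_and in H0. destruct H0 as [Hl0 F0].
  apply imply_to_and in H1. destruct H1 as [Hl1 F1].
  apply NNPP in F0. apply NNPP in F1.
  apply (Hg (l0 ++ l1)).
  { intros X HX. apply in_app_or in HX. destruct HX; auto. }
  eapply finite_union; [exact F0 | exact F1 |].
  intros m [Hp Hl]. rewrite !length_app. simpl.
  replace (length p + 1) with (S (length p)) by lia.
  rewrite prefix_S, Hp.
  destruct (d m (length p)) eqn:E.
  - right. split; [reflexivity|]. intros X HX. apply Hl, in_or_app; auto.
  - left. split; [reflexivity|]. intros X HX. apply Hl, in_or_app; auto.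
Qed.

Definition nextb (p : list bool) : bool :=
  if excluded_middle_informative (good (p ++ [false])) then false else true.

Lemma good_next p : good p -> good (p ++ [nextb p]).
Proof.
  intro H. unfold nextb. destruct (excluded_middle_informative _) as [h|h]; auto.
  destruct (@good_step p H); tauto.
Qed.

Fixpoint pre (k : nat) : list bool :=
  match k with O => [] | S k => pre k ++ [nextb (pre k)] end.

Lemma pre_length k : length (pre k) = k.
Proof. induction k; simpl; auto. rewrite length_app, IHk. simpl. lia. Qed.

Lemma point_exists :
  (forall l, (forall X, In X l -> Cn0 X) -> infinite (fun m => forall X, In X l -> X m)) ->
  exists x : Cantor, forall k l, (forall X, In X l -> Cn0 X) ->
    infinite (fun m => prefix (d m) k = prefix x k /\ forall X, In X l -> X m).
Proof.
  intro Hc.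
  assert (G : forall k, good (pre k)).
  { induction k.
    - intros l Hl Hf. apply (Hc l Hl). eapply finite_mono; [|exact Hf].
      intros m Hm. split; [reflexivity|exact Hm].
    - simpl. apply good_next, IHk. }
  exists (fun k => nextb (pre k)).
  assert (P : forall k, prefix (fun k => nextb (pre k)) k = pre k).
  { induction k; [reflexivity|]. rewrite prefix_S, IHk. reflexivity. }
  intros k l Hl. rewrite P. pose proof (G k l Hl) as H. rewrite pre_length in H. exact H.
Qed.
End Point.

Theorem lemma3p2
  (d : nat -> Cantor)
  (Hd_inj : forall m n, d m = d n -> m = n)
  (Hd_dense : forall C : clopen, (exists x, inC C x) -> exists n, inC C (d n))
  (K0 : Type) (Hcov : is_cov_E K0)
  (Cz : K0 -> nat -> clopen)
  (Cz_dec : forall a k x, inC (Cz a (S k)) x -> inC (Cz a k) x)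
  (Cz_null : forall a, inE (fun x => forall k, inC (Cz a k) x))
  (Cz_cover : forall x, exists a, forall k, inC (Cz a k) x)
  (Kap : Type) (ltK : Kap -> Kap -> Prop)
  (Hord : initial_ordinal ltK) (Hkap : is_cof_countable K0 Kap)
  (z0 : Kap) (Hz0 : forall xi, ~ ltK xi z0)
  (IJ : Type) (Jf : IJ -> K0 -> Prop)
  (HJcof : cofinal_countable Jf) (HJsize : card_le IJ Kap /\ card_le Kap IJ)
  (Alg : Kap -> Sub -> Prop) (mu : Kap -> Sub -> R)
  (H0alg : forall X, Alg z0 X <-> A0_mem d X)
  (H0mu : forall (C : clopen) (F : Sub), finite F -> mu z0 (symdiff (trace d C) F) = lam C)
  (Hinc : forall xi eta, ltK xi eta -> forall X, Alg xi X -> Alg eta X)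
  (Hi : forall xi, card_lt {X : Sub | Alg xi X} Kap)
  (Hii : forall xi, is_algebra (Alg xi) /\ fa_prob (Alg xi) (mu xi) /\
                    almost_strictly_positive (Alg xi) (mu xi))
  (Hiii : forall xi eta, ltK xi eta -> forall X, Alg xi X -> mu eta X = mu xi X)
  (Hiv : forall j : IJ, exists phi : K0 -> nat,
           (exists xi, Alg xi (Xphi d Cz (Jf j) phi)) /\
           infinite (fun n => ~ Xphi d Cz (Jf j) phi n)) :
  let A := fun X : Sub => exists xi, Alg xi X in
  (exists nu : Sub -> R, fa_prob A nu /\ almost_strictly_positive A nu) /\
  ~ sigma_centred_mod_fin A.
Proof.
  intro A.
  destruct Hord as [_ [_ [Htri _]]].
  assert (Hcom : forall a b X Y, Alg a X -> Alg b Y -> exists c, Alg c X /\ Alg c Y).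
  { intros a b X Y HX HY. destruct (Htri a b) as [h|[h|h]].
    - exists b. split; auto. eapply Hinc; eauto.
    - subst. exists b. auto.
    - exists a. split; auto. eapply Hinc; eauto. }
  assert (Hsame : forall a b X, Alg a X -> Alg b X -> mu a X = mu b X).
  { intros a b X Ha Hb. destruct (Htri a b) as [h|[h|h]].
    - symmetry. eapply Hiii; eauto.
    - subst; reflexivity.
    - eapply Hiii; eauto. }
  split.
  - set (nu := fun X : Sub =>
      match excluded_middle_informative (A X) with
      | left h => mu (proj1_sig (constructive_indefinite_description _ h)) X
      | right _ => 0%R end).
    assert (Hnu : forall xi X, Alg xi X -> nu X = mu xi X).
    { intros xi X HX. unfold nu. destruct (excluded_middle_informative (A X)) as [h|h].
      - apply Hsame; [exact (proj2_sig (constructive_indefinite_description _ h))|exact HX].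
      - exfalso. apply h. exists xi. exact HX. }
    exists nu. split.
    + split; [|split].
      * destruct (Hii z0) as [[HT _] [[H1 _] _]]. rewrite (Hnu z0 _ HT). exact H1.
      * intros X [xi HX]. rewrite (Hnu xi X HX). destruct (Hii xi) as [_ [[_ [H _]] _]]. auto.
      * intros X Y [a HX] [b HY] Hd.
        destruct (Hcom a b X Y HX HY) as [c [HX' HY']].
        destruct (Hii c) as [[_ [_ HU]] [[_ [_ Hadd]] _]].
        rewrite (Hnu c _ (HU _ _ HX' HY')), (Hnu c X HX'), (Hnu c Y HY'). auto.
    + intros X [xi HX]. rewrite (Hnu xi X HX). destruct (Hii xi) as [_ [_ Hp]]. auto.
  - intros [Cn [HC1 [HC2 HC3]]].
    assert (Hx : forall n, exists x : Cantor, forall k l, (forall X, In X l -> Cn n X) ->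
      infinite (fun m => prefix (d m) k = prefix x k /\ forall X, In X l -> X m)).
    { intro n. apply point_exists. intros l Hl. exact (HC3 n l Hl). }
    apply choice_ex in Hx. destruct Hx as [xs Hxs].
    assert (Ha : forall n, exists a, forall k, inC (Cz a k) (xs n)) by (intro; apply Cz_cover).
    apply choice_ex in Ha. destruct Ha as [al Hal].
    destruct HJcof as [_ Hcof].
    destruct (Hcof (fun a => exists n, a = al n)) as [j Hj].
    { exists (fun n => Some (al n)). intros t [n ->]. exists n. reflexivity. }
    destruct (Hiv j) as [phi [[xi HX] Hinf]].
    assert (HY : A (fun n => ~ Xphi d Cz (Jf j) phi n)).
    { exists xi. destruct (Hii xi) as [[_ [HC _]] _]. apply HC, HX. }
    destruct (HC2 _ HY Hinf) as [n Hn].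
    set (N := phi (al n)).
    apply (Hxs n (cdepth (Cz (al n) N)) [fun n => ~ Xphi d Cz (Jf j) phi n]).
    { intros X [<-|[]]. exact Hn. }
    exists N. intros m [Hpre Hl].
    destruct (Nat.lt_ge_cases m N) as [h|h]; [exact h|].
    exfalso. apply (Hl _ (or_introl eq_refl)).
    exists (al n). split; [apply Hj; exists n; reflexivity|]. split; [exact h|].
    change (phi (al n)) with N. unfold inC. rewrite Hpre. apply Hal.
Qed.
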